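(* Let $k$ be a positive integer and $n_0,\ldots,n_{k-1}$ positive integers, with indices read modulo $k$. For each $j\in\{0,\ldots,k-1\}$ let $A^{(j)}$ be a real $n_j\times n_{j+1}$ matrix. Suppose that every edge of the signed digraph $G=G_{A^{(0)}A^{(1)}\cdots A^{(k-1)}}$ lies on a single e-cycle $C$ of length $kr$ (for some positive integer $r$), i.e. the edge set of $G$ is exactly the edge set of $C$. Then $A=A^{(0)}A^{(1)}\cdots A^{(k-1)}$ is not a $P_0$-matrix.
   Context: Indices $j$ are taken modulo $k$. The signed digraph $G=G_{A^{(0)}\cdots A^{(k-1)}}$ has vertex set the disjoint union of $V_0,\ldots,V_{k-1}$ with $V_j=\{V_j^1,\ldots,V_j^{n_j}\}$; there is a directed edge from $V_j^r$ to $V_{j+1}^s$ iff $(A^{(j)})_{rs}\neq 0$, with the sign of $(A^{(j)})_{rs}$; no other edges (loops allowed when $k=1$). A cycle means a directed cycle (no repeated vertices); every cycle has length a multiple of $k$. A cycle with $kr_1$ edges, $r_2$ of them negative, is an e-cycle if $(-1)^{r_1+r_2}=1$ and an o-cycle otherwise. A $P_0$-matrix is a real square matrix all of whose principal minors are nonnegative. *)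

(* Defs.v *)
From HB Require Import structures.
From mathcomp Require Import all_boot all_order all_algebra.
From mathcomp Require Import reals.
Set Implicit Arguments. Unset Strict Implicit. Unset Printing Implicit Defensive.
Import Order.TTheory GRing.Theory Num.Theory.
Local Open Scope ring_scope.

Lemma iter_ordS_val (k : nat) (j0 : 'I_k) (m : nat) :
  val (iter m (@ordS k) j0) = ((val j0 + m) %% k)%N.
Proof.
elim: m => [|m IH] /=; first by rewrite addn0 modn_small.
by rewrite IH addnS -addn1 modnDml addn1.
Qed.

Lemma iter_ordS_k (k : nat) (j0 : 'I_k) : val j0 = 0%N -> iter k (@ordS k) j0 = j0.
Proof.
move=> h0; apply: val_inj; rewrite iter_ordS_val /=.
by move: h0 => /= ->; rewrite add0n modnn.
Qed.

Section Chain.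
Variables (R : realType) (k : nat) (hk : (0 < k)%N) (n : 'I_k -> nat)
  (A : forall j : 'I_k, 'M[R]_(n j, n (ordS j))).

Definition j0 : 'I_k := Ordinal hk.

Fixpoint prodA (m : nat) : 'M[R]_(n j0, n (iter m (@ordS k) j0)) :=
  match m as m0 return 'M[R]_(n j0, n (iter m0 (@ordS k) j0)) with
  | 0 => 1%:M
  | m'.+1 => prodA m' *m A (iter m' (@ordS k) j0)
  end.

Definition chain_prod : 'M[R]_(n j0) :=
  castmx (erefl, congr1 n (iter_ordS_k (erefl : val j0 = 0%N))) (prodA k).

(* Vertices of G: V_j^r, encoded as the dependent pair (j, r). *)
Definition vertex := {j : 'I_k & 'I_(n j)}.

(* weight of the potential edge u -> v: the entry (A^(j))_{rs} if
   u = V_j^r and v = V_{j+1}^s, and 0 otherwise (no other edges). *)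
Definition ew (u v : vertex) : R :=
  match tag v =P ordS (tag u) with
  | ReflectT e => A (tag u) (tagged u) (cast_ord (congr1 n e) (tagged v))
  | ReflectF _ => 0
  end.

(* directed edge u -> v of G (its sign is the sign of ew u v) *)
Definition is_edge (u v : vertex) : bool := ew u v != 0.

(* a directed cycle: nonempty sequence of distinct vertices
   c = [v_0; ...; v_{m-1}] with edges v_i -> v_{i+1} (indices mod m);
   its edges are the pairs (u, next c u) for u in c. *)
Definition is_dcycle (c : seq vertex) : bool :=
  [&& c != [::], uniq c & cycle is_edge c].

Definition neg_edges (c : seq vertex) : nat :=
  count (fun u => ew u (next c u) < 0) c.

(* e-cycle: cycle with k r_1 edges, r_2 negative, (-1)^(r_1+r_2) = 1 *)
Definition e_cycle (c : seq vertex) : bool :=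
  is_dcycle c && ~~ odd (size c %/ k + neg_edges c).

End Chain.

Definition principal_submx (R : pzRingType) (m : nat) (S : {set 'I_m})
    (M : 'M[R]_m) : 'M[R]_#|S| :=
  \matrix_(i, j) M (enum_val i) (enum_val j).

Definition P0_matrix (R : realType) (m : nat) (M : 'M[R]_m) : Prop :=
  forall S : {set 'I_m}, 0 <= \det (principal_submx S M).

(* Main.v *)
Require Import Defs.
From HB Require Import structures.
From mathcomp Require Import all_boot all_order all_algebra.
From mathcomp Require Import reals.
From mathcomp Require Import ring lra zify fingroup perm.
Open Scope ring_scope.
Import Order.TTheory GRing.Theory Num.Theory.
Local Open Scope ring_scope.
Set Implicit Arguments. Unset Strict Implicit. Unset Printing Implicit Defensive.

Lemma det_perm_support (R : comRingType) (N : nat) (M : 'M[R]_N) (s : 'S_N) :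
  (forall i j, j != s i -> M i j = 0) -> \det M = (-1) ^+ s * \prod_i M i (s i).
Proof.
move=> h; rewrite /determinant (bigD1 s) //=.
have -> : \sum_(t | true && (t != s)) (-1) ^+ t * \prod_i M i (t i) = 0 :> R.
  apply: big1 => t /andP[_ ne].
  have [i hi] : exists i, t i != s i.
    apply/existsP; apply: contraR ne; rewrite negb_exists => /forallP H.
    by apply/eqP/permP => i; move: (H i); rewrite negbK => /eqP.
  by rewrite (bigD1 i) //= h // mul0r mulr0.
by rewrite /= addr0.
Qed.

Lemma odd_perm_transitive (T : finType) (s : {perm T}) (x0 : T) :
  (forall x y, exists i, y = (s ^+ i)%g x) -> odd_perm s = ~~ odd #|T|.
Proof.
move=> tr; rewrite /odd_perm.
have -> : porbits s = [set porbit s x0].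
  apply/setP => X; apply/imsetP/set1P => [[x _ ->]|->]; last by exists x0.
  by apply/eqP; rewrite eq_porbit_mem; apply/porbitP; apply: tr.
by rewrite cards1 addbT.
Qed.

Lemma prod_sign (R : realDomainType) (T : eqType) (s : seq T) (G : T -> R) :
  (forall x, x \in s -> G x != 0) ->
  \prod_(x <- s) G x = (-1) ^+ count (fun x => G x < 0) s * \prod_(x <- s) `|G x|.
Proof.
elim: s => [|a s IH] h; first by rewrite !big_nil expr0 mul1r.
rewrite !big_cons /= exprD IH; last by move=> x xs; apply: h; rewrite inE xs orbT.
have [lt|ge] := ltP (G a) 0.
  by rewrite (ltr0_norm lt) expr1; ring.
by rewrite (ger0_norm ge) expr0; ring.
Qed.

Section Main.
Variables (R : realType) (k : nat) (hk : (0 < k)%N) (n : 'I_k -> nat)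
  (A : forall j : 'I_k, 'M[R]_(n j, n (ordS j))) (c : seq (vertex n)).
Hypothesis hE : forall u v : vertex n, is_edge A u v = (u \in c) && (next c u == v).

Local Notation nx := (next c).
Local Notation mkv j x := (@existT _ (fun j0 : 'I_k => 'I_(n j0)) j x).

Lemma ew_tag (v w : vertex n) : ew A v w != 0 -> tag w = ordS (tag v).
Proof. by rewrite /ew; case: eqP => // e; rewrite eqxx. Qed.

Lemma ew_next (v w : vertex n) : ew A v w = (nx v == w)%:R * ew A v (nx v).
Proof.
have [<-|ne] := eqP; first by rewrite mul1r.
rewrite mul0r; apply/eqP; case h: (ew A v w == 0) => //.
by move: (hE v w); rewrite /is_edge h /= => /esym/andP[_ /eqP].
Qed.

Lemma ew_A j x y : ew A (mkv j x) (mkv (ordS j) y) = A j x y.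
Proof.
rewrite /ew /=; case: eqP => // e.
by rewrite (eq_irrelevance e erefl) cast_ord_id.
Qed.

Definition W m u := \prod_(s < m) ew A (iter s nx u) (nx (iter s nx u)).

Lemma prodA_entry m a b : prodA hk A m a b =
  W m (mkv (j0 hk) a) * (iter m nx (mkv (j0 hk) a) == mkv (iter m (@ordS k) (j0 hk)) b)%:R.
Proof.
elim: m b => [|m IH] b.
  by rewrite /= /W big_ord0 mul1r mxE eq_Tagged.
rewrite /= mxE.
under eq_bigr do rewrite IH.
rewrite /W big_ord_recr /= -/(W m _).
set jm := iter m _ _.
set v := iter m nx _.
clearbody v; case: v => j y.
have [e|ne] := eqVneq j jm.
  subst j.
  rewrite (bigD1 y) //= big1 ?addr0; last first.
    by move=> i /negbTE ne; rewrite eq_Tagged /= eq_sym ne mulr0 mul0r.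
  rewrite eqxx mulr1 -ew_A [in LHS]ew_next; ring.
rewrite big1; last first.
  move=> i _; rewrite -tag_eqE /tag_eq /= (negbTE ne) /= mulr0 mul0r //.
have h : ew A (mkv j y) (mkv (ordS jm) b) = 0.
  apply/eqP; apply: contraNT ne => /ew_tag /= /ordS_inj ->; exact: eqxx.
by rewrite -mulrA [X in _ * X]mulrC -ew_next h mulr0.
Qed.

Lemma mkv_cast j j' (e : j = j') (p : n j = n j') y : mkv j' (cast_ord p y) = mkv j y.
Proof. by subst j'; rewrite (eq_irrelevance p erefl) cast_ord_id. Qed.

Lemma chain_entry a b : chain_prod hk A a b =
  W k (mkv (j0 hk) a) * (iter k nx (mkv (j0 hk) a) == mkv (j0 hk) b)%:R.
Proof.
rewrite /chain_prod castmxE prodA_entry /= cast_ord_id (mkv_cast (esym (iter_ordS_k (erefl : val (j0 hk) = 0%N)))) //.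
Qed.

Section Pos.
Hypothesis hU : uniq c.
Variable x0 : vertex n.
Local Notation L := (size c).
Local Notation u i := (nth x0 c i).

Lemma N1 i : (i < L)%N -> nx (u i) = u (i.+1 %% L).
Proof.
move=> hi; rewrite next_nth mem_nth // index_uniq //.
move: hi; case E: c => [//|y p] /= hi.
have [lt|eq] : (i < size p)%N \/ i = size p by lia.
  by rewrite modn_small //=; apply: set_nth_default.
by subst i; rewrite modnn /= nth_default.
Qed.

Lemma N2 i m : (i < L)%N -> iter m nx (u i) = u ((i + m) %% L).
Proof.
move=> hi; have L0 : (0 < L)%N by lia.
elim: m => [|m IH]; first by rewrite addn0 modn_small.
rewrite iterS IH N1 ?ltn_pmod // -addn1 modnDml addn1 addnS //.
Qed.

Lemma edge_u i : (i < L)%N -> tag (u (i.+1 %% L)) = ordS (tag (u i)).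
Proof.
move=> hi; rewrite -N1 //; apply: ew_tag.
by have := hE (u i) (nx (u i)); rewrite mem_nth // eqxx /is_edge => ->.
Qed.

Lemma T2 i m : (i < L)%N -> val (tag (u ((i + m) %% L))) = ((val (tag (u i)) + m) %% k)%N.
Proof.
move=> hi; have L0 : (0 < L)%N by lia.
elim: m => [|m IH]; first by rewrite !addn0 (modn_small hi) (modn_small (ltn_ord _)).

have -> : ((i + m.+1) %% L = ((i + m) %% L).+1 %% L)%N.
  by rewrite -(addn1 ((i + m) %% L)) modnDml addn1 addnS.
rewrite edge_u ?ltn_pmod // /= IH -addn1 modnDml addn1 addnS //.
Qed.

Lemma mkv_inj j : injective (fun y : 'I_(n j) => mkv j y).
Proof. by move=> a b /eqP; rewrite eq_Tagged /= => /eqP. Qed.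

Definition proj0 (d : 'I_(n (j0 hk))) (v : vertex n) : 'I_(n (j0 hk)) :=
  match tag v =P j0 hk with
  | ReflectT e => cast_ord (congr1 n e) (tagged v)
  | ReflectF _ => d end.

Lemma proj0K d v : tag v = j0 hk -> mkv (j0 hk) (proj0 d v) = v.
Proof.
rewrite /proj0; case: eqP => // e _; rewrite (mkv_cast e).
by case: v e.
Qed.

Lemma nx_inj : injective nx.
Proof. exact: can_inj (prev_next hU). Qed.

Lemma iter_nx_inj m : injective (iter m nx).
Proof. elim: m => [//|m IH] a b /= /nx_inj; exact: IH. Qed.

Hypothesis hL0 : (0 < L)%N.
Hypothesis h0 : val (tag (u 0)) = 0%N.

Lemma tag_u m : (m < L)%N -> val (tag (u m)) = (m %% k)%N.
Proof. by move=> hm; have := @T2 0 m hL0; rewrite !add0n (modn_small hm) h0. Qed.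

Lemma kL : (k %| L)%N.
Proof. by have := @T2 0 L hL0; rewrite !add0n modnn h0 => /esym/eqP. Qed.

Local Notation r := (L %/ k)%N.
Lemma Lr : L = (r * k)%N.
Proof. by rewrite divnK // kL. Qed.

Lemma tag_j0 m : (m < L)%N -> (tag (u m) == j0 hk) = (k %| m)%N.
Proof.
move=> hm; rewrite /dvdn -(tag_u hm); apply/eqP/eqP => [-> //|e].
by apply: val_inj.
Qed.

Local Notation p t := (u (t * k)%N).

Lemma p_lt t : (t < r)%N -> (t * k < L)%N.
Proof. by move=> ht; rewrite [in X in (_ < X)%N]Lr ltn_pmul2r. Qed.

Lemma iter_p q t : (t < r)%N -> iter (q * k) nx (p t) = p ((t + q) %% r).
Proof.
move=> ht; rewrite N2 ?p_lt // muln_modl -mulnDl -Lr //.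
Qed.

Lemma mem_j0 v : (v \in c) && (tag v == j0 hk) = (v \in map (fun t => p t) (iota 0 r)).
Proof.
apply/andP/mapP => [[vc tv]|[t]]; last first.
  rewrite mem_iota add0n => /andP[_ ht] ->.
  by rewrite mem_nth ?p_lt // tag_j0 ?p_lt // dvdn_mull.
have hm : (index v c < L)%N by rewrite index_mem.
move: tv; rewrite -(nth_index x0 vc) tag_j0 // => dk.
exists (index v c %/ k)%N; last by rewrite divnK.
rewrite mem_iota add0n /= ltn_divLR // -Lr //.
Qed.

Lemma uniq_pmap : uniq (map (fun t => p t) (iota 0 r)).
Proof.
rewrite map_inj_in_uniq ?iota_uniq // => t t'.
rewrite !mem_iota !add0n => /andP[_ ht] /andP[_ ht'] /eqP.
rewrite nth_uniq ?p_lt // eqn_pmul2r // => /eqP //.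
Qed.

Lemma prod_c : \prod_(v <- c) ew A v (nx v) = \prod_(t < r) W k (p t).
Proof.
rewrite (big_nth x0) [X in index_iota 0 X]Lr big_nat_mul big_mkord.
apply: eq_bigr => t _; rewrite /W.
rewrite -{1}[(t * k)%N]add0n big_addn mulSn addnK big_mkord.
apply: eq_bigr => s _.
have ht : (t < r)%N := ltn_ord t.
have hs : (s < k)%N := ltn_ord s.
have hlt : (t * k + s < L)%N.
  have : (k + t * k <= L)%N.
    by rewrite -mulSn [X in (_ <= X)%N]Lr leq_mul2r ht orbT.
  lia.
by rewrite N2 ?p_lt // (modn_small hlt) addnC.
Qed.

Lemma main_h0 : ~~ odd (r + neg_edges A c) -> ~ P0_matrix (chain_prod hk A).
Proof.
move=> hpar hP.
pose S := [set a : 'I_(n (j0 hk)) | mkv (j0 hk) a \in c].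
have memS a : (a \in S) = (mkv (j0 hk) a \in c) by rewrite inE.
have permS : perm_eq (map (fun a => mkv (j0 hk) a) (enum S)) (map (fun t => p t) (iota 0 r)).
  apply: uniq_perm; first by rewrite (map_inj_uniq (@mkv_inj _)) enum_uniq.
    exact: uniq_pmap.
  move=> v; rewrite -mem_j0; apply/mapP/andP => [[a]|[vc /eqP tv]].
    by rewrite mem_enum memS => ac ->; split=> //.
  move: vc tv; case: v => j y /= vc tv; subst j; exists y => //.
  by rewrite mem_enum memS.
have cardS : #|S| = r.
  by rewrite cardE -(size_map (fun a => mkv (j0 hk) a)) (perm_size permS) size_map size_iota.
have inS a : a \in S -> exists2 t, (t < r)%N & mkv (j0 hk) a = p t.
  move=> aS; have : mkv (j0 hk) a \in map (fun t => p t) (iota 0 r).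
    by rewrite -(perm_mem permS); apply: map_f; rewrite mem_enum.
  by case/mapP => t; rewrite mem_iota add0n => ht ->; exists t.
pose g a := proj0 a (iter k nx (mkv (j0 hk) a)).
have gE a : a \in S -> mkv (j0 hk) (g a) = iter k nx (mkv (j0 hk) a) /\ g a \in S.
  move=> /inS [t ht e].
  have := @iter_p 1 t ht; rewrite mul1n => ite.
  have r0 : (0 < r)%N by lia.
  have hq : ((t + 1) %% r < r)%N by rewrite ltn_pmod.
  have tj : tag (p ((t + 1) %% r)) = j0 hk.
    by apply/eqP; rewrite tag_j0 ?p_lt // dvdn_mull.
  rewrite /g e ite proj0K //; split => //.
  by rewrite memS proj0K // mem_nth // p_lt.
have ginj : {in S &, injective g}.
  move=> a b aS bS e; apply: (@mkv_inj (j0 hk)); apply: (@iter_nx_inj k).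
  by rewrite -(proj1 (gE _ aS)) -(proj1 (gE _ bS)) e.
pose s0 (i : 'I_#|S|) := enum_rank_in (enum_valP i) (g (enum_val i)).
have s0E i : enum_val (s0 i) = g (enum_val i).
  by rewrite /s0 enum_rankK_in //; exact: (proj2 (gE _ (enum_valP i))).
have s0inj : injective s0.
  move=> i j e; apply: enum_val_inj; apply: ginj; try exact: enum_valP.
  by rewrite -!s0E e.
pose sg := perm s0inj.
have sgE i : sg i = s0 i by rewrite permE.
pose M := principal_submx S (chain_prod hk A).
have ME i j : M i j = W k (mkv (j0 hk) (enum_val i)) *
    (mkv (j0 hk) (enum_val (sg i)) == mkv (j0 hk) (enum_val j))%:R.
  by rewrite /M /principal_submx mxE chain_entry sgE s0E (proj1 (gE _ (enum_valP i))).
have detE : \det M = (-1) ^+ sg * \prod_(i : 'I_#|S|) W k (mkv (j0 hk) (enum_val i)).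
  rewrite (det_perm_support (s:=sg)).
    by congr (_ * _); apply: eq_bigr => i _; rewrite ME eqxx mulr1.
  move=> i j ne; rewrite ME.
  have -> : (mkv (j0 hk) (enum_val (sg i)) == mkv (j0 hk) (enum_val j)) = false.
    by apply/negbTE; apply: contra ne => /eqP /mkv_inj /enum_val_inj ->.
  by rewrite mulr0.
have prodE : \prod_(i : 'I_#|S|) W k (mkv (j0 hk) (enum_val i)) = \prod_(v <- c) ew A v (nx v).
  rewrite prod_c -(big_enum_val (fun a => W k (mkv (j0 hk) a))) -big_enum /=.
  rewrite -(big_map (fun a => mkv (j0 hk) a) xpredT (W k)) (perm_big _ permS) big_map.
  by rewrite -(big_mkord xpredT (fun t => W k (p t))) /index_iota subn0.
have iters q i : mkv (j0 hk) (enum_val ((sg ^+ q)%g i)) = iter (q * k) nx (mkv (j0 hk) (enum_val i)).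
  elim: q => [|q IH]; first by rewrite expg0 perm1.
  by rewrite expgSr permM sgE s0E (proj1 (gE _ (enum_valP _))) IH mulSn iterD.
have r0 : (0 < #|S|)%N by rewrite cardS divn_gt0 // dvdn_leq // kL.
have odds : odd_perm sg = ~~ odd r.
  rewrite -cardS -[X in odd X]card_ord (@odd_perm_transitive _ _ (Ordinal r0)) //.
  move=> i j.
  have [t ht et] := inS _ (enum_valP i); have [t' ht' et'] := inS _ (enum_valP j).
  exists (t' + r - t)%N; apply: enum_val_inj; apply: (@mkv_inj (j0 hk)).
  rewrite iters et iter_p // et'.
  have -> : (t + (t' + r - t) = t' + r)%N by lia.
  by rewrite modnDr modn_small.
have nz x : x \in c -> ew A x (nx x) != 0.
  by move=> xc; have := hE x (nx x); rewrite xc eqxx /is_edge => ->.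
have Ppos : 0 < \prod_(x <- c) `|ew A x (nx x)|.
  by rewrite big_seq; apply: prodr_gt0 => x /nz; rewrite normr_gt0.
have hdet : \det M < 0.
  rewrite detE prodE (prod_sign nz) -/(neg_edges A c) odds -(signr_odd _ (neg_edges A c)).
  move: Ppos; move: (\prod_(x <- c) `|ew A x (nx x)|) => P Pp.
  move: hpar; rewrite oddD; case: (odd r); case: (odd _) => //= _.
    by rewrite expr0 expr1 mul1r mulN1r oppr_lt0.
  by rewrite expr0 expr1 mul1r mulN1r oppr_lt0.
by have := hP S; rewrite -/M leNgt hdet.
Qed.
End Pos.

End Main.



Unset Implicit Arguments.
Set Strict Implicit.
Theorem lemma5 (R : realType) (k : nat) (hk : (0 < k)%N) (n : 'I_k -> nat)
  (hn : forall j, (0 < n j)%N)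
  (A : forall j : 'I_k, 'M[R]_(n j, n (ordS j)))
  (c : seq (vertex n))
  (hC : e_cycle A c)
  (hE : forall u v : vertex n, is_edge A u v = (u \in c) && (next c u == v)) :
  ~ P0_matrix (chain_prod hk A).
Proof.
move: hC; rewrite /e_cycle /is_dcycle => /andP[/and3P[cne hU _] hpar].
have hL0 : (0 < size c)%N by move: cne; case: (c).
have [x0 _] : {x0 : vertex n | true} by move: cne; case: (c) => // x0; exists x0.
set t0 := val (tag (nth x0 c 0)).
have ht0 : (t0 < k)%N := ltn_ord _.
have kL : (k %| size c)%N.
  have := @T2 R k hk n A c hE hU x0 0 (size c) hL0.
  rewrite !add0n modnn -/t0 => /eqP; rewrite -{1}(modn_small ht0) eq_sym.
  rewrite -{2}(addn0 t0) eqn_modDl mod0n => /eqP.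
  by rewrite /dvdn => ->.
have kle : (k <= size c)%N by apply: dvdn_leq.
set i0 := ((k - t0) %% k)%N.
have hi0 : (i0 < size c)%N by apply: leq_trans kle; rewrite ltn_pmod.
have ti0 : val (tag (nth x0 c i0)) = 0%N.
  have := @T2 R k hk n A c hE hU x0 0 i0 hL0.
  rewrite add0n (modn_small hi0) -/t0 => ->.
  by rewrite modnDmr subnKC ?modnn // ltnW.
set c' := rot i0 c.
have nE : next c' =1 next c by apply: next_rot.
apply: (@main_h0 R k hk n A c' _ _ x0).
- by move=> u v; rewrite hE mem_rot nE.
- by rewrite rot_uniq.
- by rewrite size_rot.
- rewrite /c' /rot nth_cat size_drop subn_gt0 hi0 nth_drop addn0 //.
- rewrite size_rot /neg_edges.
  have -> : count (fun u => ew A u (next c' u) < 0) c' = count (fun u => ew A u (next c u) < 0) c.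
    rewrite (eq_count (a2 := fun u => ew A u (next c u) < 0)); last by move=> u; rewrite nE.
    by apply/seq.permP; rewrite /c' perm_rot.
  exact: hpar.
Qed.
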